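(* Let $\mathcal{A}=\{A_1,\dots,A_m\}$ be a bimodal collection of pairwise disjoint nonempty subsets of a finite abelian group $G$. For each $j$ let $H_j$ be the internal difference group of $A_j$ and let $a_j+H_j$ be the coset of $H_j$ containing $A_j$. Then $A_k\cap(a_j+H_j)=\emptyset$ for all $k\neq j$.
   Context: $G$ is written additively. The internal difference group of a subset $S\subseteq G$ is the subgroup generated by all $x-y$ with $x,y\in S$; a nonempty $S$ lies in a single coset of it. A collection $\{A_1,\dots,A_m\}$ of pairwise disjoint subsets of $G$ is bimodal if for every $i$ and every $\delta\in G\setminus\{0\}$, the number $N_i(\delta)$ of pairs $(a,b)$ with $a\in A_i$, $b\in A_j$ for some $j\neq i$, and $a-b=\delta$, satisfies $N_i(\delta)\in\{0,|A_i|\}$. *)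

(* Defs.v *)
From mathcomp Require Import all_boot all_algebra all_fingroup.
Import GRing.Theory.
Set Implicit Arguments.
Unset Strict Implicit.
Unset Printing Implicit Defensive.

(* G is a finite abelian group written additively: a finZmodType.
   Its canonical finGroupType structure (group law = +) lets us use <<_>>. *)

Definition diff_group (G : finZmodType) (S : {set G}) : {group G} :=
  <<[set (x - y)%R | x in S, y in S]>>%G.

Definition acoset (G : finZmodType) (a : G) (H : {set G}) : {set G} :=
  [set (a + h)%R | h in H].

Definition Ncount (G : finZmodType) (m : nat) (A : 'I_m -> {set G})
    (i : 'I_m) (delta : G) : nat :=
  #|[set p : G * G | [&& p.1 \in A i,
        [exists j : 'I_m, (j != i) && (p.2 \in A j)] &
        (p.1 - p.2)%R == delta]]|.

Definition pairwise_disjoint (G : finZmodType) (m : nat) (A : 'I_m -> {set G}) :=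
  forall i j : 'I_m, i != j -> [disjoint A i & A j].

Definition bimodal (G : finZmodType) (m : nat) (A : 'I_m -> {set G}) :=
  pairwise_disjoint A /\
  forall (i : 'I_m) (delta : G), delta != 0%R ->
    Ncount A i delta = 0 \/ Ncount A i delta = #|A i|.

(* Main.v *)
Require Import Defs.
From mathcomp Require Import all_boot all_algebra all_fingroup.
Import GRing.Theory FinRing.Theory.

Lemma solv_aux {G : zmodType} {u v d : G} : (u - v = d)%R -> v = (u - d)%R.
Proof. by move=> <-; rewrite opprB addrC subrK. Qed.

Theorem lemma3p2 (G : finZmodType) (m : nat) (A : 'I_m -> {set G}) :
  bimodal A ->
  (forall i : 'I_m, A i != set0) ->
  forall (j k : 'I_m) (a : G),
    A j \subset acoset a (diff_group (A j)) ->
    k != j ->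
    A k :&: acoset a (diff_group (A j)) = set0.
Proof.
move=> [disj bim] ne j k a sAC kj.
set H := diff_group (A j).
set C := acoset a H.
set B := [set x : G | [exists i : 'I_m, (i != j) && (x \in A i)]].
set E := B :&: C.
apply/eqP; rewrite -subset0; apply/subsetP => b0 /setIP [b0k b0C].
have notAB : forall x, x \in A j -> x \in B -> False.
  move=> x xA; rewrite inE => /existsP [i /andP [ij xi]].
  by rewrite (disjointFr (disj i j ij) xi) in xA.
have HC : forall c h, c \in C -> h \in H -> (c + h)%R \in C.
  move=> c h /imsetP [h0 h0H ->] hH; apply/imsetP; exists (h0 + h)%R.
    by rewrite -zmodMgE groupM.
  by rewrite addrA.
have gH : forall x y, x \in A j -> y \in A j -> (x - y)%R \in H.
  by move=> x y xA yA; apply: mem_gen; apply: imset2_f.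
have key : forall b x y, b \in E -> x \in A j -> y \in A j -> (b + (y - x))%R \in E.
  move=> b x y /setIP [bB bC] xA yA.
  set d := (x - b)%R.
  have dn0 : d != 0%R.
    by rewrite subr_eq0; apply/eqP => exb; apply: (notAB x xA); rewrite exb.
  set P := [set p : G * G | [&& p.1 \in A j,
        [exists i : 'I_m, (i != j) && (p.2 \in A i)] & (p.1 - p.2)%R == d]].
  have xbP : (x, b) \in P.
    by rewrite inE /= xA eqxx andbT; move: bB; rewrite inE.
  have cardP : #|P| = #|A j|.
    case: (bim j d dn0); rewrite /Ncount -/P => // P0.
    move/eqP: P0; rewrite cards_eq0 => /eqP P0; by move: xbP; rewrite P0 inE.
  have inj : {in P &, injective (fun p : G * G => p.1)}.
    move=> [p1 p2] [q1 q2]; rewrite !inE /= => /and3P [_ _ /eqP e1] /and3P [_ _ /eqP e2] e.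
    subst q1; by rewrite (solv_aux e1) (solv_aux e2).
  have imeq : (fun p : G * G => p.1) @: P = A j.
    apply/eqP; rewrite eqEcard card_in_imset // cardP leqnn andbT.
    by apply/subsetP => z /imsetP [p]; rewrite inE => /and3P [pA _ _] ->.
  move: (yA); rewrite -imeq => /imsetP [[p1 p2]]; rewrite inE /= => /and3P [_ p2B /eqP pd] py.
  subst p1.
  have e : p2 = (b + (y - x))%R.
    by rewrite (solv_aux pd) /d opprB addrCA.
  rewrite inE; apply/andP; split; first by rewrite -e inE.
  apply: HC => //.
  exact: gH.
set K := [set h : G | [forall e in E, (e + h)%R \in E]].
have gK : group_set K.
  apply/group_setP; split.
    by rewrite inE; apply/forall_inP => e eE; rewrite zmod1gE addr0.
  move=> h1 h2; rewrite !inE => /forall_inP K1 /forall_inP K2.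
  by apply/forall_inP => e eE; rewrite zmodMgE addrA; apply: K2; apply: K1.
have HK : H \subset Group gK.
  rewrite /H /diff_group gen_subG; apply/subsetP => g /imset2P [x y xA yA ->].
  by rewrite inE; apply/forall_inP => e eE; apply: key.
have b0E : b0 \in E.
  rewrite inE b0C andbT inE; apply/existsP; exists k; by rewrite kj.
have CE : C \subset E.
  apply/subsetP => c /imsetP [h hH ->].
  move: b0C => /imsetP [h0 h0H b0e].
  have -> : (a + h = b0 + (h - h0))%R by rewrite b0e -addrA [(h0 + _)%R]addrCA subrr addr0.
  have : (h - h0)%R \in Group gK.
    by apply: (subsetP HK); rewrite -zmodVgE -zmodMgE groupM ?groupV.
  by rewrite inE => /forall_inP; apply.
case/set0Pn: (ne j) => x xA.
exfalso; apply: (notAB x xA).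
by move: (subsetP CE x (subsetP sAC x xA)) => /setIP [].

Qed.
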